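(* For every integer $n\ge1$, $$\sup_{0\ne f\in\mathcal{T}_n}\frac{|f(0)|}{\|f\|_{L_2[0,1]}} \ge n.$$
   Context: For an integer $n\ge1$, $\mathcal{T}_n$ denotes the set of all functions $f:\mathbb{R}\to\mathbb{C}$ of the form $f(t)=\sum_{j=1}^n a_j e^{i\lambda_j t}$ with $a_j\in\mathbb{C}$ (possibly zero) and real exponents $\lambda_1<\lambda_2<\cdots<\lambda_n$. $\|f\|_{L_2[0,1]}=(\int_0^1|f|^2)^{1/2}$. *)

(* Defs.v *)
(* classical reals. Complex numbers are represented by pairs
   (real part, imaginary part) of reals. *)
From Stdlib Require Import Reals.
Open Scope R_scope.

Fixpoint rsum (n : nat) (g : nat -> R) : R :=
  match n with
  | O => 0
  | S k => rsum k g + g k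
  end.

(* f(t) = sum_{j<n} a_j e^{i lam_j t}, with a_j = ar j + i ai j.
   Real and imaginary parts of f(t): *)
Definition es_re (n : nat) (ar ai lam : nat -> R) (t : R) : R :=
  rsum n (fun j => ar j * cos (lam j * t) - ai j * sin (lam j * t)).
Definition es_im (n : nat) (ar ai lam : nat -> R) (t : R) : R :=
  rsum n (fun j => ar j * sin (lam j * t) + ai j * cos (lam j * t)).

Definition es_abs2 (n : nat) (ar ai lam : nat -> R) (t : R) : R :=
  (es_re n ar ai lam t)^2 + (es_im n ar ai lam t)^2.

Definition es_abs (n : nat) (ar ai lam : nat -> R) (t : R) : R :=
  sqrt (es_abs2 n ar ai lam t).

Definition strictly_incr (n : nat) (lam : nat -> R) : Prop :=
  forall i j : nat, (i < j)%nat -> (j < n)%nat -> lam i < lam j.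

Definition es_nonzero (n : nat) (ar ai lam : nat -> R) : Prop :=
  exists t : R, es_re n ar ai lam t <> 0 \/ es_im n ar ai lam t <> 0.

(* Main.v *)
Require Import Defs.
From Stdlib Require Import Reals.
From mathcomp Require all_boot all_algebra.
From mathcomp Require Rstruct ring zify.
Module Alg.
Import all_boot all_algebra Rstruct ring zify.
Import GRing.Theory Num.Theory.
Local Open Scope ring_scope.
Lemma size_prodX (I : finType) (P : pred I) (a : I -> R) :
  size (\prod_(i | P i) ('X - (a i)%:P)) = (#|P|).+1.
Proof.
rewrite size_prod; last by move=> i _; rewrite polyXsubC_eq0.
under eq_bigr do rewrite size_XsubC.
rewrite sum_nat_const. 

lia.
Qed.

Section Hilb.
Variable n : nat.
Hypothesis hn : (0 < n)%nat.

Definition N0 (x : R) : R := \prod_(i < n.-1) (x - (i.+1)%:R).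
Definition wk (k : 'I_n) : R := \prod_(l < n | l != k) ((l:nat)%:R - (k:nat)%:R).
Definition AA : R := (\prod_(l < n) ((l:nat).+1)%:R) / N0 0.
Definition cc (k : 'I_n) : R := AA * N0 (- ((k:nat).+1)%:R) / wk k.

Lemma wk_neq0 k : wk k != 0.
Proof.
apply/prodf_neq0 => l hl; rewrite subr_eq0 eqr_nat; exact: hl.
Qed.

Definition Dp : {poly R} :=
  \sum_(k < n) cc k *: \prod_(l < n | l != k) ('X - (- ((l:nat).+1)%:R)%:P)
  - AA *: \prod_(i < n.-1) ('X - ((i:nat).+1)%:R%:P).

Lemma Dp_horner x : Dp.[x] =
  \sum_(k < n) cc k * \prod_(l < n | l != k) (x + ((l:nat).+1)%:R) - AA * N0 x.
Proof.
rewrite /Dp hornerD hornerN horner_sum hornerZ horner_prod /N0.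
congr (_ - _ * _); last by apply: eq_bigr => i _; rewrite hornerXsubC.
apply: eq_bigr => k _; rewrite hornerZ horner_prod; congr (_ * _).
by apply: eq_bigr => l _; rewrite hornerXsubC opprK.
Qed.

Lemma Dp_size : (size Dp <= n)%nat.
Proof.
rewrite /Dp; apply: (leq_trans (size_polyD _ _)); rewrite geq_max; apply/andP; split.
  apply: (leq_trans (size_sum _ _ _)); apply/bigmax_leqP => k _.
  apply: (leq_trans (size_scale_leq _ _)); rewrite size_prodX.
  have -> : #|(fun l : 'I_n => l != k)| = #|predC1 k| by apply: eq_card.
  by rewrite cardC1 card_ord prednK.
rewrite size_polyN; apply: (leq_trans (size_scale_leq _ _)).
have -> : \prod_(i < n.-1) ('X - ((i:nat).+1)%:R%:P) =
   \prod_(i < n.-1 | predT i) ('X - ((i:nat).+1)%:R%:P) by [].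
by rewrite size_prodX cardT size_enum_ord prednK.
Qed.

Lemma Dp_root (j : 'I_n) : Dp.[- ((j:nat).+1)%:R] = 0.
Proof.
rewrite Dp_horner [X in X - _](bigD1 j) //= [\sum_(i < n | i != j) _]big1 ?addr0.
  have -> : \prod_(l < n | l != j) (- ((j:nat).+1)%:R + ((l:nat).+1)%:R) = wk j.
    by apply: eq_bigr => l _; rewrite -!natr1; ring.
  by rewrite /cc divfK ?wk_neq0 // subrr.
move=> k hk; rewrite (bigD1 j) 1?eq_sym //= addrC subrr mul0r mulr0 //.
Qed.

Lemma Dp_eq0 : Dp = 0.
Proof.
apply: (@roots_geq_poly_eq0 _ _ [seq - ((j:nat).+1)%:R | j : 'I_n]).
- by apply/allP => x /mapP [j _ ->]; apply/rootP; apply: Dp_root.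
- rewrite map_inj_uniq ?enum_uniq // => a b /eqP.
  rewrite eqr_opp eqr_nat eqSS => /eqP h; exact: val_inj.
- by rewrite size_map size_enum_ord Dp_size.
Qed.

Lemma N0_nat (j : nat) : (0 < j)%nat -> (j < n)%nat -> N0 j%:R = 0.
Proof.
move=> h0 hj; rewrite /N0.
have hi : (j.-1 < n.-1)%nat by lia.
rewrite (bigD1 (Ordinal hi)) //= prednK // subrr mul0r //.
Qed.

Lemma N00_neq0 : N0 0 != 0.
Proof. apply/prodf_neq0 => i _; by rewrite sub0r oppr_eq0 pnatr_eq0. Qed.

Lemma hilb (j : nat) : (j < n)%nat ->
  \sum_(k < n) cc k / (j + k + 1)%:R = (j == 0%nat)%:R.
Proof.
move=> hj.
have P0 : \prod_(l < n) (j%:R + ((l:nat).+1)%:R) != 0 :> R.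
  by apply/prodf_neq0 => l _; rewrite -natrD pnatr_eq0; lia.
have E := Dp_horner j%:R; rewrite Dp_eq0 horner0 in E.
have E2 : \sum_(k < n) cc k / (j + k + 1)%:R =
   (\sum_(k < n) cc k * \prod_(l < n | l != k) (j%:R + ((l:nat).+1)%:R))
   / \prod_(l < n) (j%:R + ((l:nat).+1)%:R).
  rewrite mulr_suml; apply: eq_bigr => k _.
  rewrite [X in _ = _ / X](bigD1 k) //=.
  set Q := \prod_(l < n | l != k) _.
  have hQ : Q != 0.
    by apply/prodf_neq0 => l _; rewrite -natrD pnatr_eq0; lia.
  have hk : j%:R + ((k:nat).+1)%:R != 0 :> R by rewrite -natrD pnatr_eq0; lia.
  rewrite addn1 -addnS natrD; field; rewrite -nat1r in hk; by rewrite hQ hk.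
rewrite E2.
have -> : \sum_(k < n) cc k * \prod_(l < n | l != k) (j%:R + ((l:nat).+1)%:R)
   = AA * N0 j%:R by apply/eqP; rewrite -subr_eq0 -E.
case: j hj P0 {E E2} => [|j] hj P0.
  rewrite /AA mulfVK ?N00_neq0 //.
  have -> : \prod_(l < n) (0%:R + ((l:nat).+1)%:R) = \prod_(l < n) ((l:nat).+1)%:R :> R.
    by apply: eq_bigr => l _; rewrite add0r.
  rewrite mulfV //. 
  by apply/prodf_neq0 => l _; rewrite pnatr_eq0.
by rewrite N0_nat // mulr0 mul0r.
Qed.

End Hilb.

Lemma cc0 (m : nat) : @cc m.+1 ord0 = ((m.+1)%:R)^+2.
Proof.
set Q1 := \prod_(i < m) ((i:nat).+1)%:R : R.
set Q2 := \prod_(i < m) ((i:nat).+2)%:R : R.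
set s := \prod_(i < m) (-1) : R.
have hQ1 : Q1 != 0 by apply/prodf_neq0 => i _; rewrite pnatr_eq0.
have hs : s != 0 by apply/prodf_neq0 => i _; rewrite oppr_eq0 oner_eq0.
have e1 : \prod_(l < m.+1) ((l:nat).+1)%:R = Q1 * (m.+1)%:R :> R by rewrite big_ord_recr.
have e2 : \prod_(l < m.+1) ((l:nat).+1)%:R = Q2 :> R by rewrite big_ord_recl mul1r.
have e3 : N0 m.+1 0 = s * Q1.
  rewrite /N0 /= /s /Q1 -big_split /=; apply: eq_bigr => i _; by rewrite sub0r mulN1r.
have e4 : N0 m.+1 (- (1%:R)) = s * Q2.
  rewrite /N0 /= /s /Q2 -big_split /=; apply: eq_bigr => i _.
  by rewrite mulN1r -[(i:nat).+2%:R]natr1 opprD addrC.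
have e5 : @wk m.+1 ord0 = Q1.
  rewrite /wk big_mkcond big_ord_recl /= mul1r /Q1; apply: eq_bigr => i _.
  by rewrite subr0.
rewrite /cc /AA e3 e4 e5.
have : Q2 = Q1 * (m.+1)%:R by rewrite -e2 e1.
move=> ->. rewrite e1. move: (m.+1%:R) => x. clearbody s Q1. clear -hs hQ1. rewrite !RdivE !RmultE. field. by rewrite hs hQ1.
Qed.

Lemma rsum_big n g : rsum n g = \sum_(i < n) g i.
Proof. elim: n => [|n IH]; first by rewrite big_ord0. by rewrite big_ord_recr /= IH. Qed.

Lemma hilbert_R (n : nat) : lt O n -> exists c : nat -> R,
  c O = Rmult (INR n) (INR n) /\
  forall j, lt j n -> rsum n (fun k => Rdiv (c k) (INR (j + k + 1))) =
     (if Nat.eqb j O then IZR 1 else IZR 0).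
Proof.
case: n => [|m] hn; first by lia.
exists (fun k => @cc m.+1 (inord k)); split.
  have -> : inord 0 = ord0 :> 'I_m.+1 by apply: val_inj; rewrite /= inordK.
  by rewrite cc0 !INRE expr2.
move=> j hj; rewrite rsum_big.
have hj' : (j < m.+1)%nat by apply/ltP.
have -> : (if Nat.eqb j 0 then IZR 1 else IZR 0) = (j == 0%nat)%:R.
  by case: j {hj hj'} => [|j] //=.
rewrite -(@hilb m.+1 isT j hj').
apply: eq_bigr => k _. by rewrite inord_val INRE.
Qed.
End Alg.

From Stdlib Require Import Lra Lia.
From Coquelicot Require Import Coquelicot.
Open Scope R_scope.

Lemma rsum_ext m f g : (forall j, (j < m)%nat -> f j = g j) -> rsum m f = rsum m g.
Proof.
induction m; intros H; simpl; auto.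
rewrite IHm by (intros; apply H; lia). rewrite H by lia. auto.
Qed.

Lemma rsum_lin m a b f g : rsum m (fun j => a * f j + b * g j) = a * rsum m f + b * rsum m g.
Proof. induction m; simpl; [ring| rewrite IHm; ring]. Qed.

Lemma rsum_lin2 m a b f g : rsum m (fun j => a * f j - b * g j) = a * rsum m f - b * rsum m g.
Proof. induction m; simpl; [ring| rewrite IHm; ring]. Qed.

Lemma rsum_add m f g : rsum m (fun j => f j + g j) = rsum m f + rsum m g.
Proof. induction m; simpl; [ring| rewrite IHm; ring]. Qed.

Lemma rsum_shift m f : rsum (S m) f = f 0%nat + rsum m (fun j => f (S j)).
Proof. induction m; simpl in *; [ring| rewrite IHm; ring]. Qed.

Lemma rsum_zero m f : (forall j, (j < m)%nat -> f j = 0) -> rsum m f = 0.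
Proof. induction m; intros H; simpl; auto. rewrite IHm by (intros; apply H; lia). rewrite H by lia. ring. Qed.

Lemma rsum_delta m f : (0 < m)%nat -> rsum m (fun j => if Nat.eqb j 0 then f j else 0) = f 0%nat.
Proof.
intros H; destruct m; [lia|]. rewrite rsum_shift. simpl.
rewrite rsum_zero; [ring| intros; reflexivity].
Qed.

Section ES.
Variable h : R.
Definition lamh (j : nat) : R := INR j * h.
Definition E (m : nat) (a : nat -> C) (t : R) : C :=
  (es_re m (fun j => fst (a j)) (fun j => snd (a j)) lamh t,
   es_im m (fun j => fst (a j)) (fun j => snd (a j)) lamh t).

Definition zC (t : R) : C := (cos (h * t), sin (h * t)).
Definition shiftR (a : nat -> C) (j : nat) : C :=
  match j with O => (0,0) | S k => a k end.

Lemma E_shift m a t : E (S m) (shiftR a) t = Cmult (zC t) (E m a t).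
Proof.
unfold E, es_re, es_im, zC. rewrite !rsum_shift. simpl shiftR. simpl fst. simpl snd.
unfold Cmult; simpl fst; simpl snd.
f_equal.
- replace (0 * cos (lamh 0 * t) - 0 * sin (lamh 0 * t)) with 0 by ring. rewrite Rplus_0_l.
  rewrite <- rsum_lin2.
  apply rsum_ext; intros j _. unfold lamh. rewrite S_INR.
  replace ((INR j + 1) * h * t) with (INR j * h * t + h * t) by ring.
  rewrite cos_plus, sin_plus. ring.
- replace (0 * sin (lamh 0 * t) + 0 * cos (lamh 0 * t)) with 0 by ring. rewrite Rplus_0_l.
  rewrite <- rsum_lin.
  apply rsum_ext; intros j _. unfold lamh. rewrite S_INR.
  replace ((INR j + 1) * h * t) with (INR j * h * t + h * t) by ring.
  rewrite cos_plus, sin_plus. ring.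
Qed.

Lemma E_add m a b t : E m (fun j => Cplus (a j) (b j)) t = Cplus (E m a t) (E m b t).
Proof.
unfold E, es_re, es_im, Cplus; simpl. f_equal; rewrite <- rsum_add; apply rsum_ext; intros; simpl; ring.
Qed.

Lemma E_scal m k a t : E m (fun j => Cmult k (a j)) t = Cmult k (E m a t).
Proof.
destruct k as [kr ki].
unfold E, es_re, es_im, Cmult; simpl. f_equal.
- rewrite <- rsum_lin2; apply rsum_ext; intros; simpl; ring.
- rewrite <- rsum_lin; apply rsum_ext; intros; simpl; ring.
Qed.

Lemma E_last m a t : a m = (0,0) -> E (S m) a t = E m a t.
Proof.
intros H. unfold E, es_re, es_im. simpl. rewrite H; simpl. f_equal; ring.
Qed.

Lemma E_delta m k t : (0 < m)%nat -> E m (fun j => if Nat.eqb j 0 then k else (0,0)) t = k.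
Proof.
intros Hm. destruct m; [lia|]. destruct k as [kr ki].
unfold E, es_re, es_im. rewrite !rsum_shift. simpl.
rewrite !rsum_zero by (intros; simpl; ring).
unfold lamh. simpl. rewrite !Rmult_0_l, cos_0, sin_0. f_equal; ring.
Qed.

Lemma E_zero m t : E m (fun _ => (0,0)) t = (0,0).
Proof.
unfold E, es_re, es_im; simpl. rewrite !rsum_zero by (intros; simpl; ring). reflexivity.
Qed.

Fixpoint hor (m : nat) (c : nat -> R) (w : C) : C :=
  match m with
  | O => (0,0)
  | S m' => Cplus (c 0%nat, 0) (Cmult w (hor m' (fun k => c (S k)) w))
  end.

Fixpoint coef (m : nat) (c : nat -> R) : nat -> C :=
  match m with
  | O => fun _ => (0,0)
  | S m' => fun j =>
     Cplus (if Nat.eqb j 0 then (c 0%nat, 0) else (0,0))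
       (Cmult (0, - / h) (Cplus (shiftR (coef m' (fun k => c (S k))) j)
                                (Cmult (-1, 0) (coef m' (fun k => c (S k)) j))))
  end.

Lemma coef_supp m : forall c j, (m <= j)%nat -> coef m c j = (0,0).
Proof.
induction m; intros c j Hj; simpl; auto.
destruct j as [|j]; [lia|]. simpl.
rewrite !IHm by lia. unfold Cplus, Cmult; simpl. f_equal; ring.
Qed.

Definition uC (t : R) : C := (sin (h * t) / h, (1 - cos (h * t)) / h).

Lemma rep m : h <> 0 -> forall c t, E m (coef m c) t = hor m c (uC t).
Proof.
intros hh. induction m; intros c t.
- simpl. apply E_zero.
- simpl hor. rewrite <- IHm.
  change (coef (S m) c) with (fun j =>
     Cplus (if Nat.eqb j 0 then (c 0%nat, 0) else (0,0))
       (Cmult (0, - / h) (Cplus (shiftR (coef m (fun k => c (S k))) j)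
                                (Cmult (-1, 0) (coef m (fun k => c (S k)) j))))).
  rewrite E_add, E_delta by lia. rewrite E_scal, E_add, E_scal, E_shift.
  rewrite E_last by (apply coef_supp; lia).
  destruct (E m (coef m (fun k => c (S k))) t) as [x y].
  unfold zC, uC, Cplus, Cmult; simpl. f_equal; field; auto.
Qed.

End ES.

Fixpoint hrr (m : nat) (c : nat -> R) (x : R) : R :=
  match m with O => 0 | S m' => c 0%nat + x * hrr m' (fun k => c (S k)) x end.

Lemma hor_real m : forall c x, hor m c (x,0) = (hrr m c x, 0).
Proof.
induction m; intros c x; simpl; auto. rewrite IHm. unfold Cplus, Cmult; simpl. f_equal; ring.
Qed.

Lemma rsum_scal m a f : rsum m (fun j => a * f j) = a * rsum m f.
Proof. induction m; simpl; [ring| rewrite IHm; ring]. Qed.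

Lemma hrr_sum m : forall c x, hrr m c x = rsum m (fun k => c k * x ^ k).
Proof.
induction m; intros c x; simpl hrr; auto.
rewrite rsum_shift, IHm, <- rsum_scal. simpl. f_equal; [ring|].
apply rsum_ext; intros; ring.
Qed.

Lemma hor_lip m : forall c, exists L B, 0 <= L /\ 0 <= B /\
  forall w x, Cmod w <= 1 -> Cmod x <= 1 ->
    Cmod (Cplus (hor m c w) (Copp (hor m c x))) <= L * Cmod (Cplus w (Copp x)) /\
    Cmod (hor m c x) <= B.
Proof.
induction m; intros c.
- exists 0, 0. split; [lra|split;[lra|]]. intros w x _ _. simpl.
  replace (Cplus (0,0) (Copp (0,0))) with (RtoC 0) by (unfold Cplus, Copp, RtoC; simpl; f_equal; ring).
  replace (0,0) with (RtoC 0) by reflexivity. rewrite Cmod_0. split; [|lra].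
  pose proof (Cmod_ge_0 (Cplus w (Copp x))). nra.
- destruct (IHm (fun k => c (S k))) as [L [B [HL [HB H]]]].
  exists (L + B), (Rabs (c 0%nat) + B). split; [lra|split; [pose proof (Rabs_pos (c 0%nat)); lra|]].
  intros w x Hw Hx. destruct (H w x Hw Hx) as [H1 H2]. simpl hor.
  set (Hw' := hor m (fun k => c (S k)) w) in *.
  set (Hx' := hor m (fun k => c (S k)) x) in *.
  split.
  + replace (Cplus (Cplus (c 0%nat, 0) (Cmult w Hw')) (Copp (Cplus (c 0%nat, 0) (Cmult x Hx'))))
      with (Cplus (Cmult w (Cplus Hw' (Copp Hx'))) (Cmult (Cplus w (Copp x)) Hx')).
    2:{ destruct w, x, Hw', Hx'. unfold Cplus, Cmult, Copp; simpl. f_equal; ring. }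
    eapply Rle_trans; [apply Cmod_triangle|]. rewrite !Cmod_mult.
    pose proof (Cmod_ge_0 w). pose proof (Cmod_ge_0 (Cplus w (Copp x))).
    pose proof (Cmod_ge_0 (Cplus Hw' (Copp Hx'))). pose proof (Cmod_ge_0 Hx').
    nra.
  + eapply Rle_trans; [apply Cmod_triangle|]. rewrite Cmod_mult.
    replace (c 0%nat, 0) with (RtoC (c 0%nat)) by reflexivity. rewrite Cmod_R.
    pose proof (Cmod_ge_0 x). pose proof (Cmod_ge_0 Hx'). nra.
Qed.

Lemma trig_facts th : 0 <= th <= 1 -> th - th^3/6 <= sin th <= th /\ 1 - th^2/2 <= cos th <= 1.
Proof.
intros H.
pose proof (sin_bound th 0 ltac:(lra) ltac:(pose proof PI2_3_2; lra)) as S.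
pose proof (cos_bound th 0 ltac:(pose proof PI_RGT_0; unfold Rdiv; lra) ltac:(pose proof PI2_3_2; lra)) as Co.
unfold sin_approx, cos_approx in *. simpl in S, Co.
unfold sin_term, cos_term in *. simpl in *.
split; [split|split].
- lra.
- destruct (Req_dec th 0) as [->|]; [rewrite sin_0; lra| pose proof (sin_lt_x th ltac:(lra)); lra].
- lra.
- pose proof (COS_bound th); lra.
Qed.

Lemma uC_bounds h t : 0 < h <= 1 -> 0 <= t <= 1 ->
  Cmod (uC h t) <= 1 /\ Cmod (Cplus (uC h t) (Copp (t,0))) <= 2*h.
Proof.
intros Hh Ht.
assert (Hth : 0 <= h * t <= 1) by nra.
destruct (trig_facts (h*t) Hth) as [[S1 S2] [C1 C2]].
pose proof (sin2_cos2 (h*t)) as SC. unfold Rsqr in SC.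
set (s := sin (h*t)) in *. set (c := cos (h*t)) in *.
set (X := s / h). set (Y := (1 - c) / h).
assert (EX : s = X * h) by (unfold X; field; lra).
assert (EY : 1 - c = Y * h) by (unfold Y; field; lra).
unfold uC, Cmod, Cplus, Copp; simpl fst; simpl snd. fold s c X Y.
split.
- rewrite <- sqrt_1. apply sqrt_le_1_alt.
  assert (H2 : (X^2 + Y^2) * h^2 <= h^2 * t^2).
  { replace ((X^2 + Y^2) * h^2) with ((X*h)^2 + (Y*h)^2) by ring.
    rewrite <- EX, <- EY. nra. }
  assert (X^2 + Y^2 <= t^2). { apply Rmult_le_reg_r with (h^2); [nra|]. lra. } nra.
- replace (2*h) with (sqrt ((2*h)^2)) by (rewrite sqrt_pow2; lra).
  apply sqrt_le_1_alt.
  assert (A1 : Rabs (X - t) * h <= h * h).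
  { replace (Rabs (X - t) * h) with (Rabs ((X-t)*h)) by (rewrite Rabs_mult, (Rabs_right h); lra).
    replace ((X - t) * h) with (s - h*t) by (rewrite EX; ring).
    assert (T3 : t^3 <= 1) by (simpl; assert (t*t <= 1) by nra; nra). assert (HT : (h*t)^3 <= h*h) by (replace ((h*t)^3) with ((h*h)*(h*t^3)) by ring; assert (h*t^3 <= 1) by nra; nra). apply Rabs_le. split; nra. }
  assert (A2 : Rabs (X - t) <= h) by (apply Rmult_le_reg_r with h; lra).
  assert (A3 : 0 <= Y * h <= h * h).
  { rewrite <- EY. assert ((h*t)^2 <= h*h) by (replace ((h*t)^2) with ((h*h)*(t*t)) by ring; assert (t*t <= 1) by nra; nra). lra. }
  assert (A4 : 0 <= Y <= h).
  { split; [apply Rmult_le_reg_r with h; lra| apply Rmult_le_reg_r with h; lra]. }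
  assert (A5 : (X + - t)^2 <= h^2).
  { replace (X + - t) with (X - t) by ring. rewrite <- pow2_abs. pose proof (Rabs_pos (X - t)). nra. }
  nra.
Qed.

Lemma is_RInt_mono m : is_RInt (fun x => x ^ m) 0 1 (/ INR (m + 1)).
Proof.
assert (HI : INR (m+1) <> 0) by (rewrite plus_INR; simpl; pose proof (pos_INR m); lra).
replace (/ INR (m+1)) with (minus (1 ^ (m+1) / INR (m+1)) (0 ^ (m+1) / INR (m+1))).
2:{ rewrite pow1, pow_i by lia. unfold minus, plus, opp; simpl. field; auto. }
apply (is_RInt_derive (fun x => x ^ (m+1) / INR (m+1))).
- intros x _. auto_derive; auto. replace (Init.Nat.pred (m+1)) with m by lia. field; auto.
- intros x _. apply (@ex_derive_continuous R_AbsRing R_NormedModule (fun y => y ^ m)). auto_derive. auto.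
Qed.

Lemma is_RInt_rsum m (f : nat -> R -> R) (I : nat -> R) :
  (forall k, (k < m)%nat -> is_RInt (f k) 0 1 (I k)) ->
  is_RInt (fun x => rsum m (fun k => f k x)) 0 1 (rsum m I).
Proof.
induction m; intros H; simpl.
- apply (is_RInt_ext (fun _ => 0)); [intros; reflexivity|].
  pose proof (@is_RInt_const R_NormedModule 0 1 0) as K.
  replace (scal (1 - 0) (0:R_NormedModule)) with 0 in K by (unfold scal; simpl; unfold mult; simpl; ring).
  exact K.
- apply (is_RInt_plus (fun x => rsum m (fun k => f k x)) (f m)).
  + apply IHm; intros; apply H; lia.
  + apply H; lia.
Qed.

Lemma is_RInt_scal' (f : R -> R) a I : is_RInt f 0 1 I -> is_RInt (fun x => a * f x) 0 1 (a * I).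
Proof. intros H. apply (is_RInt_scal f 0 1 a I H). Qed.

Lemma rsum_mul m f g : rsum m f * rsum m g = rsum m (fun j => rsum m (fun k => f j * g k)).
Proof.
rewrite Rmult_comm, <- rsum_scal.
apply rsum_ext; intros j _. rewrite Rmult_comm, <- rsum_scal. reflexivity.
Qed.

Lemma int_p2 n c : (0 < n)%nat ->
  (forall j, (j < n)%nat -> rsum n (fun k => c k / INR (j + k + 1)) = if Nat.eqb j 0 then 1 else 0) ->
  is_RInt (fun x => (hrr n c x) ^ 2) 0 1 (c 0%nat).
Proof.
intros Hn Hc.
apply (is_RInt_ext (fun x => rsum n (fun j => rsum n (fun k => (c j * c k) * x ^ (j + k))))).
{ intros x _. rewrite hrr_sum. simpl. rewrite Rmult_1_r, rsum_mul.
  apply rsum_ext; intros j _; apply rsum_ext; intros k _. rewrite pow_add. ring. }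
replace (c 0%nat) with (rsum n (fun j => rsum n (fun k => (c j * c k) * / INR (j + k + 1)))).
- apply is_RInt_rsum; intros j _.
  apply (is_RInt_rsum n (fun k x => c j * c k * x ^ (j + k))); intros k _.
  apply is_RInt_scal'. apply is_RInt_mono.
- rewrite <- (rsum_delta n c) by auto.
  apply rsum_ext; intros j Hj.
  transitivity (c j * rsum n (fun k => c k / INR (j + k + 1))).
  { rewrite <- rsum_scal. apply rsum_ext; intros; unfold Rdiv; ring. }
  rewrite Hc by auto. destruct (Nat.eqb j 0); ring.
Qed.

Lemma exd_re n ar ai lam t : ex_derive (es_re n ar ai lam) t.
Proof.
induction n; unfold es_re in *; simpl.
- apply ex_derive_const.
- apply (ex_derive_plus (fun t => rsum n _)); [exact IHn|]. auto_derive; auto.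
Qed.

Lemma exd_im n ar ai lam t : ex_derive (es_im n ar ai lam) t.
Proof.
induction n; unfold es_im in *; simpl.
- apply ex_derive_const.
- apply (ex_derive_plus (fun t => rsum n _)); [exact IHn|]. auto_derive; auto.
Qed.

Lemma exd_abs2 n ar ai lam t : ex_derive (es_abs2 n ar ai lam) t.
Proof.
unfold es_abs2. pose proof (exd_re n ar ai lam t). pose proof (exd_im n ar ai lam t).
auto_derive; auto.
Qed.

Lemma exRInt_abs2 n ar ai lam : ex_RInt (es_abs2 n ar ai lam) 0 1.
Proof.
apply (@ex_RInt_continuous R_CompleteNormedModule). intros z _.
apply (@ex_derive_continuous R_AbsRing R_NormedModule). apply exd_abs2.
Qed.

Lemma Cmod_sq (z : C) : Cmod z ^ 2 = fst z ^ 2 + snd z ^ 2.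
Proof. unfold Cmod. rewrite pow2_sqrt; auto. nra. Qed.

Lemma hrr0 m c : (0 < m)%nat -> hrr m c 0 = c 0%nat.
Proof. intros H; destruct m; [lia|]. simpl. ring. Qed.

Theorem theorem2p6 (n : nat) (hn : (1 <= n)%nat) (c : R) (hc : c < INR n) :
  exists (ar ai lam : nat -> R),
    strictly_incr n lam /\ es_nonzero n ar ai lam /\
    exists pr : Riemann_integrable (es_abs2 n ar ai lam) 0 1,
      c < es_abs n ar ai lam 0 / sqrt (RiemannInt pr).
Proof.
destruct (Alg.hilbert_R n ltac:(lia)) as [cf [Hc0 Hcj]].
destruct (hor_lip n cf) as [L [B [HL [HB Hlip]]]].
set (N := INR n).
assert (HN : 1 <= N) by (unfold N; apply (le_INR 1); lia).
set (N2 := N * N).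
set (c1 := Rmax c (N/2)).
assert (Hc1 : 0 < c1 /\ c1 < N /\ c <= c1).
{ unfold c1. split; [|split]. - pose proof (Rmax_r c (N/2)); lra.
  - apply Rmax_lub_lt; [exact hc|lra]. - apply Rmax_l. }
set (M := N2 / c1).
assert (HM : c1 * M = N2) by (unfold M; field; lra).
assert (HM2 : N2 < M * M).
{ assert (N < M). { apply Rmult_lt_reg_l with c1; [lra|]. rewrite HM. unfold N2. nra. }
  unfold N2. nra. }
set (eta := Rmin (N2/2) ((M*M - N2)/2)).
assert (Heta : 0 < eta /\ eta <= N2/2 /\ eta <= (M*M - N2)/2).
{ unfold eta. split; [assert (1 <= N2) by (unfold N2; nra); apply Rmin_pos; lra|split; [apply Rmin_l|apply Rmin_r]]. }
set (eps := Rmin 1 (eta / (2*B+1))).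
assert (Heps : 0 < eps /\ eps <= 1 /\ eps * (2*B+1) <= eta).
{ unfold eps. split; [apply Rmin_pos; [lra| apply Rdiv_lt_0_compat; lra]|split; [apply Rmin_l|]].
  pose proof (Rmin_r 1 (eta / (2*B+1))).
  apply Rle_trans with (eta / (2*B+1) * (2*B+1)); [apply Rmult_le_compat_r; lra|].
  right; field; lra. }
set (q := eps / (2*L+1)).
assert (Hq : 0 < q /\ q * (2*L) <= eps).
{ unfold q. split; [apply Rdiv_lt_0_compat; lra|].
  apply Rle_trans with (eps / (2*L+1) * (2*L+1)); [apply Rmult_le_compat_l; [apply Rlt_le, Rdiv_lt_0_compat|]; lra|right; field; lra]. }
set (h := Rmin 1 q).
assert (Hh : 0 < h /\ h <= 1 /\ L * (2*h) <= eps).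
{ assert (h <= q) by apply Rmin_r. assert (h <= 1) by apply Rmin_l.
  assert (0 < h) by (apply Rmin_pos; lra). split; [lra|split; [lra|]]. nra. }
assert (hh : h <> 0) by lra.
exists (fun j => fst (coef h n cf j)), (fun j => snd (coef h n cf j)), (lamh h).
assert (Hrep : forall t, es_re n (fun j => fst (coef h n cf j)) (fun j => snd (coef h n cf j)) (lamh h) t
   = fst (hor n cf (uC h t)) /\
   es_im n (fun j => fst (coef h n cf j)) (fun j => snd (coef h n cf j)) (lamh h) t
   = snd (hor n cf (uC h t))).
{ intros t. rewrite <- (rep h n hh cf t). unfold E. simpl. auto. }
assert (Hu0 : uC h 0 = (0,0)).
{ unfold uC. rewrite Rmult_0_r, sin_0, cos_0. f_equal; field; auto. }
assert (H0 : hor n cf (uC h 0) = (N2, 0)).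
{ rewrite Hu0, hor_real, hrr0 by lia. rewrite Hc0. reflexivity. }
split; [|split].
- intros i j Hij Hjn. unfold lamh. apply Rmult_lt_compat_r; [lra|]. apply lt_INR; auto.
- exists 0. left. rewrite (proj1 (Hrep 0)), H0. simpl. unfold N2. nra.
- exists (ex_RInt_Reals_0 _ _ _ (exRInt_abs2 n _ _ _)).
  rewrite <- RInt_Reals.
  set (f := es_abs2 n _ _ _).
  set (p := hrr n cf).
  assert (Hpt : forall t, 0 <= t <= 1 -> Rabs (f t - p t ^ 2) <= eta).
  { intros t Ht.
    destruct (uC_bounds h t ltac:(lra) Ht) as [Hw Hwx].
    assert (Hx : Cmod (t,0) <= 1).
    { replace (t,0) with (RtoC t) by reflexivity. rewrite Cmod_R. rewrite Rabs_right; lra. }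
    destruct (Hlip (uC h t) (t,0) Hw Hx) as [H1 H2].
    rewrite hor_real in H1, H2.
    replace ((hrr n cf t, 0)) with (RtoC (hrr n cf t)) in H1, H2 by reflexivity.
    rewrite Cmod_R in H2.
    set (w := hor n cf (uC h t)) in *.
    set (D := Cmod (Cplus w (Copp (RtoC (hrr n cf t))))) in *.
    assert (HD : D <= eps).
    { apply Rle_trans with (L * Cmod (Cplus (uC h t) (Copp (t, 0)))); auto.
      apply Rle_trans with (L * (2*h)); [apply Rmult_le_compat_l; auto|lra]. }
    assert (Hf : f t = Cmod w ^ 2).
    { unfold f, es_abs2. rewrite (proj1 (Hrep t)), (proj2 (Hrep t)), Cmod_sq. reflexivity. }
    assert (A1 : Cmod w <= D + Rabs (p t)).
    { replace w with (Cplus (Cplus w (Copp (RtoC (hrr n cf t)))) (RtoC (hrr n cf t))) at 1.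
      2:{ destruct w. unfold Cplus, Copp, RtoC; simpl. f_equal; ring. }
      eapply Rle_trans; [apply Cmod_triangle|]. rewrite Cmod_R. unfold D, p. lra. }
    assert (A2 : Rabs (p t) <= D + Cmod w).
    { replace (p t) with (hrr n cf t) by reflexivity. rewrite <- Cmod_R.
      replace (RtoC (hrr n cf t)) with (Cplus (Copp (Cplus w (Copp (RtoC (hrr n cf t))))) w).
      2:{ destruct w. unfold Cplus, Copp, RtoC; simpl. f_equal; ring. }
      eapply Rle_trans; [apply Cmod_triangle|]. rewrite Cmod_opp. unfold D. lra. }
    rewrite Hf. replace (p t ^ 2) with (Rabs (p t) ^ 2) by apply pow2_abs.
    pose proof (Cmod_ge_0 w) as G1. pose proof (Rabs_pos (p t)) as G2.
    replace (Rabs (hrr n cf t)) with (Rabs (p t)) in H2 by reflexivity.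
    set (a := Cmod w) in *. set (b := Rabs (p t)) in *.
    assert (G3 : a + b <= 2*B + 1) by lra.
    assert (G4 : Rabs (a - b) <= eps) by (apply Rabs_le; lra).
    assert (G5 : Rabs (a^2 - b^2) <= eps * (2*B+1)).
    { replace (a^2 - b^2) with ((a - b) * (a + b)) by ring. rewrite Rabs_mult.
      rewrite (Rabs_right (a+b)) by lra. apply Rmult_le_compat; auto; try lra. apply Rabs_pos. }
    lra. }
  assert (Hp2 : is_RInt (fun x => p x ^ 2) 0 1 N2).
  { replace N2 with (cf 0%nat) by (rewrite Hc0; reflexivity). apply int_p2; [lia|]. exact Hcj. }
  assert (Hint : forall k, is_RInt (fun x => p x ^ 2 + k) 0 1 (N2 + k)).
  { intros k. pose proof (@is_RInt_const R_NormedModule 0 1 k) as K.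
    replace (scal (1 - 0) (k:R_NormedModule)) with k in K by (unfold scal; simpl; unfold mult; simpl; ring).
    apply (is_RInt_plus _ _ _ _ _ _ Hp2 K). }
  assert (HI1 : RInt f 0 1 <= N2 + eta).
  { rewrite <- (is_RInt_unique _ _ _ _ (Hint eta)).
    apply RInt_le; [lra| apply exRInt_abs2| eexists; apply Hint|].
    intros x Hx. pose proof (Hpt x ltac:(lra)). apply Rabs_le_between in H. lra. }
  assert (HI2 : N2 - eta <= RInt f 0 1).
  { replace (N2 - eta) with (N2 + - eta) by ring. rewrite <- (is_RInt_unique _ _ _ _ (Hint (-eta))).
    apply RInt_le; [lra| eexists; apply Hint| apply exRInt_abs2|].
    intros x Hx. pose proof (Hpt x ltac:(lra)). apply Rabs_le_between in H. lra. }
  set (I := RInt f 0 1) in *.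
  assert (HIpos : 0 < I) by (unfold N2 in *; nra).
  assert (Hsq : sqrt I < M).
  { assert (HM0 : 0 < M) by (apply Rmult_lt_reg_l with c1; [lra| rewrite HM, Rmult_0_r; unfold N2; nra]).
    rewrite <- (sqrt_pow2 M) by lra.
    apply sqrt_lt_1; [lra| nra | simpl; lra]. }
  assert (Hsq0 : 0 < sqrt I) by (apply sqrt_lt_R0; lra).
  assert (Habs : es_abs n (fun j => fst (coef h n cf j)) (fun j => snd (coef h n cf j)) (lamh h) 0 = N2).
  { unfold es_abs, es_abs2. rewrite (proj1 (Hrep 0)), (proj2 (Hrep 0)), H0. simpl.
    replace (N2 * (N2 * 1) + 0 * (0 * 1)) with (N2 ^ 2) by ring. apply sqrt_pow2. unfold N2; nra. }
  rewrite Habs.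
  apply Rle_lt_trans with c1; [lra|].
  apply Rmult_lt_reg_r with (sqrt I); [lra|]. unfold Rdiv. rewrite Rmult_assoc, Rinv_l by lra.
  rewrite Rmult_1_r. rewrite <- HM. apply Rmult_lt_compat_l; lra.
Qed.
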